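(* There exists a primary monoid $H$ in $\mathcal{C}_2$ having full system of sets of lengths, i.e. $\mathcal{L}(H) = \mathbb{P}_{\mathrm{fin}}$.
   Context: All monoids are commutative, cancellative, reduced, written additively. $\mathcal{C}_2$ is the collection of all rank-$2$ submonoids of free commutative monoids of finite rank, where the rank of $H$ is the rank of its Grothendieck group $\mathrm{gp}(H)$. For an atomic monoid $H$ and $x\in H$, $\mathsf{L}(x)$ is the set of all $n$ such that $x$ is a sum of $n$ atoms (with $\mathsf{L}(0)=\{0\}$); the system of sets of lengths is $\mathcal{L}(H)=\{\mathsf{L}(x) \mid x \in H\}$. $\mathbb{P}_{\mathrm{fin}} := \{\{0\},\{1\}\} \cup \{S \subset \mathbb{Z}_{\ge 2} \mid S \text{ finite}\}$ (the empty set included). A submonoid $S$ of $H$ is divisor-closed if $s\in S$, $x\in H$ and $x$ divides $s$ in $H$ (i.e. $s = x+z$ for some $z \in H$) imply $x\in S$; $H$ is primary if it is nontrivial and its only divisor-closed submonoids are $\{0\}$ and $H$. *)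

(* Defs.v *)
From mathcomp Require Import all_boot all_algebra.
Set Implicit Arguments. Unset Strict Implicit. Unset Printing Implicit Defensive.
Import GRing.Theory.

Definition vec (n : nat) := {ffun 'I_n -> nat}.
Definition vzero (n : nat) : vec n := [ffun => 0%N].
Definition vadd (n : nat) (x y : vec n) : vec n := [ffun i => (x i + y i)%N].

Definition submonoid (n : nat) (H : vec n -> Prop) : Prop :=
  H (vzero n) /\ (forall x y, H x -> H y -> H (vadd x y)).

Definition is_atom (n : nat) (H : vec n -> Prop) (u : vec n) : Prop :=
  H u /\ u <> vzero n /\
  (forall a b, H a -> H b -> u = vadd a b -> a = vzero n \/ b = vzero n).

Definition vsum (n : nat) (s : seq (vec n)) : vec n := foldr (@vadd n) (vzero n) s.

(* L(x): set of lengths of x (as a predicate on nat); L(0) = {0} via the empty sum. *)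
Definition lengths (n : nat) (H : vec n -> Prop) (x : vec n) : nat -> Prop :=
  fun k => exists s : seq (vec n),
    size s = k /\ (forall u, u \in s -> is_atom H u) /\ vsum s = x.

Definition in_Pfin (L : nat -> Prop) : Prop :=
  (forall k, L k <-> k = 0%N) \/ (forall k, L k <-> k = 1%N) \/
  (exists s : seq nat, s != [::] /\ all (fun k => 2 <= k)%N s /\ (forall k, L k <-> k \in s)).

Definition full_system (n : nat) (H : vec n -> Prop) : Prop :=
  (forall x, H x -> in_Pfin (lengths H x)) /\
  (forall L, in_Pfin L -> exists x, H x /\ (forall k, lengths H x k <-> L k)).

Definition in_gp (n : nat) (H : vec n -> Prop) (w : 'I_n -> int) : Prop :=
  exists a b, H a /\ H b /\ (forall i, w i = ((a i)%:Z - (b i)%:Z)%R).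

Definition Z_indep (n k : nat) (v : 'I_k -> 'I_n -> int) : Prop :=
  forall c : 'I_k -> int,
    (forall j, (\sum_(i < k) c i * v i j)%R = 0%R) -> forall i, c i = 0%R.

Definition rank_ge (n : nat) (H : vec n -> Prop) (k : nat) : Prop :=
  exists v : 'I_k -> 'I_n -> int, (forall i, in_gp H (v i)) /\ Z_indep v.

(* rank of H = rank of gp(H) = maximal size of a Z-independent family in gp(H). *)
Definition has_rank (n : nat) (H : vec n -> Prop) (r : nat) : Prop :=
  rank_ge H r /\ ~ rank_ge H r.+1.

Definition divisor_closed_sub (n : nat) (H S : vec n -> Prop) : Prop :=
  (forall x, S x -> H x) /\ submonoid S /\
  (forall s x z, S s -> H x -> H z -> s = vadd x z -> S x).

Definition primary (n : nat) (H : vec n -> Prop) : Prop :=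
  (exists x, H x /\ x <> vzero n) /\
  (forall S, divisor_closed_sub H S ->
     (forall x, S x <-> x = vzero n) \/ (forall x, S x <-> H x)).

(* Main.v *)
Require Import Defs.
From mathcomp Require Import all_boot all_algebra.
From mathcomp Require Import zify.
From Stdlib Require Import Classical.
Set Implicit Arguments. Unset Strict Implicit. Unset Printing Implicit Defensive.

Definition i0 : 'I_2 := @Ordinal 2 0 isT.
Definition i1 : 'I_2 := @Ordinal 2 1 isT.

Lemma ord2_cases (P : 'I_2 -> Prop) : P i0 -> P i1 -> forall j, P j.
Proof.
move=> h0 h1 [[|[|m]] Hm] //.
- by rewrite (_ : Ordinal Hm = i0) //; apply: val_inj.
- by rewrite (_ : Ordinal Hm = i1) //; apply: val_inj.
Qed.

Lemma vec2_eq (x y : vec 2) : x i0 = y i0 -> x i1 = y i1 -> x = y.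
Proof. move=> h0 h1; apply/ffunP; exact: ord2_cases. Qed.

Lemma vaddE n (x y : vec n) i : vadd x y i = (x i + y i)%N.
Proof. by rewrite /vadd ffunE. Qed.
Lemma vzeroE n i : vzero n i = 0%N.
Proof. by rewrite /vzero ffunE. Qed.

Lemma vsum_cons n (g : vec n) r : vsum (g :: r) = vadd g (vsum r).
Proof. by []. Qed.

Lemma vsum_cat n (r1 r2 : seq (vec n)) : vsum (r1 ++ r2) = vadd (vsum r1) (vsum r2).
Proof.
elim: r1 => [|g r IH] /=.
  by apply/ffunP=> i; rewrite vaddE vzeroE.
rewrite -/(vsum (r ++ r2)) IH; apply/ffunP=> i; rewrite !vaddE addnA.
by [].
Qed.

Lemma vsumE n (r : seq (vec n)) i : vsum r i = \sum_(g <- r) g i.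
Proof.
elim: r => [|g r IH]; first by rewrite big_nil vzeroE.
by rewrite vsum_cons vaddE big_cons IH.
Qed.

Lemma mem_le n (r : seq (vec n)) g c : g \in r -> g c <= vsum r c.
Proof.
elim: r => [|h r IH] //; rewrite in_cons vsum_cons vaddE => /orP [/eqP -> | /IH].
  exact: leq_addr.
move=> /leq_trans; apply; exact: leq_addl.
Qed.

Definition mk (a b : nat) : vec 2 := [ffun i : 'I_2 => if val i == 0%N then a else b].
Lemma mk0 a b : mk a b i0 = a. Proof. by rewrite /mk ffunE. Qed.
Lemma mk1 a b : mk a b i1 = b. Proof. by rewrite /mk ffunE. Qed.

Lemma le_sumn l s : l \in s -> l <= sumn s.
Proof. elim: s => [|a s IH] //=; rewrite in_cons => /orP [/eqP -> | /IH]; lia. Qed.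

Definition Sg i : seq nat := odflt [::] (@unpickle (seq nat) i).
Definition Tg i := sumn (Sg i).
Definition Mg i := (2 * Tg i + 2)%N.
Definition Kg i := (Tg i)`!.
Definition Yg i := ((Mg i + 2) * Kg i)%N.
Fixpoint Dg i := if i is j.+1 then (Dg j + Yg j * (Mg j * (Mg j + Dg j) + 1))%N else 0%N.
Definition Ng i := (Mg i * (Mg i + Dg i) + 1)%N.
Definition vv i l := mk 1 (Kg i %/ (l - 1) * Ng i).
Definition ww i l := mk (Mg i - l + 1) ((Mg i + 1) * Kg i * Ng i).
Definition xx i := mk (Mg i) (Yg i * Ng i).
Definition Gad i (g : vec 2) : bool :=
  has (fun l => (2 <= l) && ((g == vv i l) || (g == ww i l))) (Sg i).
Definition Fg (g : vec 2) : bool := [&& 1 <= g i0, 1 <= g i1 & g i1 <= g i0 * g i0].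
Definition Gen (g : vec 2) : Prop := Fg g \/ exists i, Gad i g.
Definition Hm (x : vec 2) : Prop :=
  exists r : seq (vec 2), (forall g, g \in r -> Gen g) /\ vsum r = x.

Lemma DS j : Dg j.+1 = (Dg j + Yg j * Ng j)%N. Proof. by []. Qed.
Lemma D_mono i j : i <= j -> Dg i <= Dg j.
Proof. elim: j => [|j IH]; first by rewrite leqn0 => /eqP ->.
rewrite leq_eqVlt => /orP [/eqP -> // | /IH]; rewrite DS; lia. Qed.
Lemma YN_le_D j i : j < i -> Yg j * Ng j <= Dg i.
Proof. move=> h; apply: leq_trans (D_mono h); rewrite DS; lia. Qed.
Lemma K_pos i : 0 < Kg i. Proof. exact: fact_gt0. Qed.
Lemma N_gt_D j : Dg j < Ng j.
Proof. rewrite /Ng /Mg; nia. Qed.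
Lemma N_pos j : 0 < Ng j. Proof. rewrite /Ng; lia. Qed.

Lemma Kdiv i l : 2 <= l <= Tg i ->
  Kg i %/ (l - 1) * (l - 1) = Kg i /\ 1 <= Kg i %/ (l - 1) <= Kg i.
Proof.
move=> hl.
have hd : l - 1 %| Kg i by apply: dvdn_fact; lia.
have e := divnK hd; split => //; rewrite leq_div andbT.
case E: (Kg i %/ (l - 1)) => //; move: e (K_pos i); rewrite E; lia.
Qed.

Lemma Gad_facts i g : Gad i g ->
  exists l, [/\ l \in Sg i, 2 <= l <= Tg i & (g = vv i l \/ g = ww i l)].
Proof.
move/hasP=> [l hl /andP [h2 /orP [/eqP e | /eqP e]]]; exists l;
  (split => //; [by rewrite h2 le_sumn | by tauto]).
Qed.

Lemma Gad_bounds i g : Gad i g ->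
  [/\ 1 <= g i0, g i0 <= Mg i, Ng i <= g i1, g i1 <= Yg i * Ng i & Ng i %| g i1].
Proof.
have hN := N_pos i; have hK := K_pos i.
move/Gad_facts=> [l [hl h2 [->|->]]].
- have [_ /andP [hq1 hq2]] := Kdiv h2.
  rewrite /vv mk0 mk1 dvdn_mull //; split => //; first by rewrite /Mg; lia.
    by rewrite leq_pmull.
  apply: leq_mul => //; rewrite /Yg; apply: leq_trans hq2 _; apply: leq_pmull; lia.
- have hM : l <= Mg i by rewrite /Mg; lia.
  rewrite /ww mk0 mk1 dvdn_mull //; split => //; try lia.
    by apply: leq_pmull; rewrite muln_gt0 hK andbT addn1.
  rewrite /Yg; nia.
Qed.

Lemma memR (T : eqType) (g u : T) r : u \in r -> u \in g :: r.
Proof. by rewrite in_cons => ->; rewrite orbT. Qed.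

Lemma Gen_pos g : Gen g -> 1 <= g i0 /\ 1 <= g i1.
Proof.
case=> [/and3P [h0 h1 _] // | [i /Gad_bounds [h0 _ h1 _ _]]].
split => //; apply: leq_trans h1; exact: N_pos.
Qed.

Lemma vsum_size (r : seq (vec 2)) c : (forall g, g \in r -> 1 <= g c) -> size r <= vsum r c.
Proof.
elim: r => [|g r IH] h //=; rewrite -/(vsum r) vaddE.
rewrite -add1n; apply: leq_add; [exact: h g (mem_head _ _) | exact: IH (fun u hu => h u (memR g hu))].
Qed.

Lemma vsum_nil_eq (r : seq (vec 2)) : (forall g, g \in r -> 1 <= g i0) -> vsum r i0 = 0 -> r = [::].
Proof. case: r => [//|g r] h; have := vsum_size h => /=; lia. Qed.

Lemma vadd0 n (x : vec n) : vadd x (vzero n) = x.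
Proof. by apply/ffunP=> i; rewrite vaddE vzeroE addn0. Qed.
Lemma vaddC n (x y : vec n) : vadd x y = vadd y x.
Proof. by apply/ffunP=> i; rewrite !vaddE addnC. Qed.

Lemma H0 : Hm (vzero 2). Proof. by exists [::]. Qed.
Lemma Hadd x y : Hm x -> Hm y -> Hm (vadd x y).
Proof.
move=> [r1 [h1 <-]] [r2 [h2 <-]]; exists (r1 ++ r2); split; last exact: vsum_cat.
by move=> g; rewrite mem_cat => /orP [/h1|/h2].
Qed.
Lemma Hgen g : Gen g -> Hm g.
Proof. move=> h; exists [:: g]; split; [by move=> u; rewrite inE => /eqP -> | exact: vadd0]. Qed.

Lemma H_pos x : Hm x -> x <> vzero 2 -> 1 <= x i0 /\ 1 <= x i1.
Proof.
move=> [[|g r] [h <-]] //= hx.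
have [a b] := Gen_pos (h g (mem_head _ _)); rewrite vaddE vaddE; lia.
Qed.

Lemma H_zero x : Hm x -> x i0 = 0 -> x = vzero 2.
Proof.
move=> hx e; case: (classic (x = vzero 2)) => // /(H_pos hx) [h _]; lia.
Qed.

Lemma Hsum (r : seq (vec 2)) : (forall u, u \in r -> Hm u) -> Hm (vsum r).
Proof.
elim: r => [|g r IH] h; first exact: H0.
rewrite vsum_cons; apply: Hadd; first exact: h (mem_head _ _).
apply: IH => u hu; apply: h; exact: memR.
Qed.

Lemma atom_pos u : is_atom Hm u -> 1 <= u i0 /\ 1 <= u i1.
Proof. by move=> [h [hn _]]; apply: H_pos. Qed.

Lemma lengths_H x k : lengths Hm x k -> Hm x.
Proof. move=> [s [_ [h <-]]]; apply: Hsum => u /h []; done. Qed.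

Lemma gad_list i (r : seq (vec 2)) : (forall g, g \in r -> Gad i g) -> vsum r i0 <= Mg i ->
  (vsum r i0 = size r /\ size r <= vsum r i1 /\ vsum r i1 <= size r * (Kg i * Ng i))
  \/ (exists l, [/\ l \in Sg i, 2 <= l <= Tg i, vsum r i0 = Mg i - l + 1 + (size r).-1,
        (Mg i + 1) * Kg i * Ng i + (size r).-1 <= vsum r i1 & 0 < size r]).
Proof.
elim: r => [|g r IH] h hM.
  by left; rewrite /vsum /= !vzeroE.
rewrite vsum_cons !vaddE in hM *.
have hg := h g (mem_head _ _).
have {}IH := IH (fun u hu => h u (memR g hu)).
have hM' : vsum r i0 <= Mg i by lia.
have {}IH := IH hM'.
have [l [hl h2 [eg|eg]]] := Gad_facts hg.
- have [_ /andP [hq1 hq2]] := Kdiv h2.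
  have hN := N_pos i.
  have e0 : g i0 = 1 by rewrite eg /vv mk0.
  have e1a : 1 <= g i1 by rewrite eg /vv mk1 muln_gt0 hN andbT.
  have e1b : g i1 <= Kg i * Ng i by rewrite eg /vv mk1 leq_mul2r hq2 orbT.
  case: IH => [[a [b c]] | [l' [hl' h2' a b c]]].
  + left; rewrite /= mulSn; lia.
  + right; exists l'; split => //=; lia.
- have e0 : g i0 = Mg i - l + 1 by rewrite eg /ww mk0.
  have e1 : g i1 = (Mg i + 1) * Kg i * Ng i by rewrite eg /ww mk1.
  case: IH => [[a [b c]] | [l' [hl' h2' a b c]]].
  + right; exists l; split => //=; lia.
  + exfalso; move: hM; rewrite /Mg in e0 a *; lia.
Qed.

Lemma small_gen i g : Gen g -> ~~ Gad i g -> g i0 <= Mg i -> g i1 <= Yg i * Ng i ->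
  1 <= g i1 <= (Mg i + Dg i) * g i0.
Proof.
move=> hG hn h0 h1; have [p0 p1] := Gen_pos hG; rewrite p1 /=.
case: hG => [/and3P [_ _ hF] | [j hj]].
  apply: leq_trans hF _; rewrite leq_mul2r; apply/orP; right; lia.
have [a _ b c _] := Gad_bounds hj.
case: (ltngtP j i) => hji.
- have := YN_le_D hji; nia.
- have h3 := YN_le_D hji; have h4 := N_gt_D j.
  have h5 : Dg i.+1 <= Dg j by apply: D_mono.
  rewrite DS in h5; lia.
- by subst j; rewrite hj in hn.
Qed.

Lemma sep_aux i (r : seq (vec 2)) :
  (forall g, g \in r -> [/\ Gen g, g i0 <= Mg i & g i1 <= Yg i * Ng i]) ->
  exists A B, [/\ vsum r i1 = A + B, Ng i %| A, B <= (Mg i + Dg i) * vsum r i0 &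
     ((forall g, g \in r -> Gad i g) \/ 1 <= B)].
Proof.
elim: r => [|g r IH] h.
  exists 0, 0; rewrite /vsum /= !vzeroE; split => //; by left.
have [A [B [e hA hB hor]]] := IH (fun u hu => h u (memR g hu)).
have [hg h0 h1] := h g (mem_head _ _).
rewrite vsum_cons !vaddE.
case hgi: (Gad i g).
- exists (g i1 + A), B; split.
  + by rewrite e addnA.
  + by rewrite dvdn_add //; have [] := Gad_bounds hgi.
  + by rewrite mulnDr; apply: leq_trans hB _; apply: leq_addl.
  + case: hor => [hall|]; last by right.
    by left => u; rewrite in_cons => /orP [/eqP -> | /hall].
- have /andP [s1 s2] := small_gen hg (negbT hgi) h0 h1.
  exists A, (g i1 + B); split.
  + by rewrite e addnCA.
  + done.
  + by rewrite mulnDr; apply: leq_add.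
  + by right; rewrite addn_gt0 s1.
Qed.

Lemma sep i (r : seq (vec 2)) y : (forall g, g \in r -> Gen g) -> vsum r = y ->
  y i0 <= Mg i -> Ng i %| y i1 -> y i1 <= Yg i * Ng i -> forall g, g \in r -> Gad i g.
Proof.
move=> hG ey h0 hd h1.
have [A [B [e hA hB hor]]] : exists A B, [/\ vsum r i1 = A + B, Ng i %| A,
     B <= (Mg i + Dg i) * vsum r i0 & ((forall g, g \in r -> Gad i g) \/ 1 <= B)].
  apply: sep_aux => g hg; split; first exact: hG.
  - apply: leq_trans h0; rewrite -ey; exact: mem_le.
  - apply: leq_trans h1; rewrite -ey; exact: mem_le.
case: hor => // hB1; exfalso.
rewrite ey in e hB.
have hdB : Ng i %| B by rewrite -(dvdn_addr B hA) -e.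
have := dvdn_leq hB1 hdB.
have : (Mg i + Dg i) * y i0 <= (Mg i + Dg i) * Mg i by rewrite leq_mul2l h0 orbT.
rewrite /Ng; lia.
Qed.

Lemma Gad_Gen i g : Gad i g -> Gen g.
Proof. by move=> h; right; exists i. Qed.

Lemma vsum_nil (r : seq (vec 2)) : (forall g, g \in r -> Gen g) -> vsum r = vzero 2 -> r = [::].
Proof.
move=> h e; apply: vsum_nil_eq; first by move=> g /h /Gen_pos [].
by rewrite e vzeroE.
Qed.

Lemma gad_atom i g : Gad i g -> is_atom Hm g.
Proof.
move=> hg; have [b0 bM bN bY bd] := Gad_bounds hg.
split; first exact/Hgen/(Gad_Gen hg).
split; first by move=> e; move: b0; rewrite e vzeroE.
move=> a b [ra [hra ea]] [rb [hrb eb]] eg.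
apply: NNPP => /not_or_and [na nb].
have hr : forall u, u \in ra ++ rb -> Gen u by move=> u; rewrite mem_cat => /orP [/hra|/hrb].
have er : vsum (ra ++ rb) = g by rewrite vsum_cat ea eb.
have hall := sep hr er bM bd bY.
have hsz : 2 <= size (ra ++ rb).
  rewrite size_cat; case: ra hra ea {hr er hall} => [_ ea|? ? _ _]; first by case: na; rewrite -ea.
  case: rb hrb eb => [_ eb|? ? _ _]; first by case: nb; rewrite -eb.
  by rewrite /= addnS.
have hsz2 := vsum_size (r := ra ++ rb) (c := i0) (fun u hu => proj1 (Gen_pos (hr u hu))).
rewrite er in hsz2.
have [l [hl h2 [eg'|eg']]] := Gad_facts hg.
  by move: hsz2; rewrite eg' /vv mk0; lia.
have hKN : 0 < Kg i * Ng i by rewrite muln_gt0 K_pos N_pos.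
have hM2 : vsum (ra ++ rb) i0 <= Mg i by rewrite er.
case: (gad_list hall hM2) => [[e0 [_ e1]]|[l' [_ _ _ hB hs]]].
  move: e0 e1; rewrite er eg' /ww mk0 mk1 -mulnA => e0.
  have : Mg i - l + 1 <= Mg i by lia.
  rewrite e0; nia.
by move: hB; rewrite er eg' /ww mk1; lia.
Qed.

Lemma atom_in_gad i u z : is_atom Hm u -> Hm z -> vadd u z = xx i -> Gad i u.
Proof.
move=> hu [rz [hrz ez]] e.
have [[ru [hru eu]] [nu hsplit]] := hu.
have hr : forall g, g \in ru ++ rz -> Gen g by move=> g; rewrite mem_cat => /orP [/hru|/hrz].
have er : vsum (ru ++ rz) = xx i by rewrite vsum_cat eu ez.
have hall := sep hr er.
have hall' : forall g, g \in ru ++ rz -> Gad i g.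
  apply: hall; rewrite /xx ?mk0 ?mk1 //; exact: dvdn_mull.
case: ru hru eu {hr er hall} hall' => [_ eu|g r' hru eu hall']; first by case: nu; rewrite -eu.
have hg : Gad i g by apply: hall'; rewrite mem_head.
move: eu; rewrite vsum_cons => eu.
have hr' : Hm (vsum r') by exists r'; split => // w hw; apply: hru; exact: memR.
have [] := hsplit g (vsum r') (Hgen (hru g (mem_head _ _))) hr' (esym eu).
  by move=> e0; move: (Gen_pos (hru g (mem_head _ _))); rewrite e0 vzeroE => [[]].
move=> e0; have er' : r' = [::] by apply: vsum_nil => // w hw; apply: hru; exact: memR.
by move: eu; rewrite er' /vsum /= vadd0 => <-.
Qed.

Lemma vsum_nseq n (v : vec 2) c : vsum (nseq n v) c = n * v c.
Proof. elim: n => [|n IH]; first by rewrite /vsum /= vzeroE. 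
by rewrite /= -/(vsum _) vaddE IH mulSn. Qed.

Lemma mem_split_sum (q : seq (vec 2)) u : (forall w, w \in q -> Hm w) -> u \in q ->
  exists z, Hm z /\ vsum q = vadd u z.
Proof.
elim: q => [|h q IH] // hq; rewrite in_cons => /orP [/eqP -> | hu].
  exists (vsum q); split => //; apply: Hsum => w hw; apply: hq; exact: memR.
have [z [hz e]] := IH (fun w hw => hq w (memR h hw)) hu.
exists (vadd h z); split; first by apply: Hadd => //; apply: hq; exact: mem_head.
rewrite vsum_cons e; apply/ffunP=> c; rewrite !vaddE; exact: addnCA.
Qed.

Lemma xx_len1 i k : lengths Hm (xx i) k -> k \in Sg i.
Proof.
move=> [q [<- [hq e]]].
have hall : forall u, u \in q -> Gad i u.
  move=> u hu; have [z [hz ez]] := mem_split_sum (fun w hw => proj1 (hq w hw)) hu.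
  apply: (atom_in_gad (z := z)) => //; first exact: hq.
  by rewrite -ez.
have hM : vsum q i0 <= Mg i by rewrite e /xx mk0.
have hKN : 0 < Kg i * Ng i by rewrite muln_gt0 K_pos N_pos.
case: (gad_list hall hM) => [[e0 [_ e1]] | [l [hl h2 e0 _ hs]]].
  by move: e0 e1; rewrite e /xx mk0 mk1 /Yg => <-; nia.
move: e0; rewrite e /xx mk0 /Mg => e0.
have -> : size q = l by lia.
done.
Qed.

Lemma xx_len2 i k : k \in Sg i -> 2 <= k -> lengths Hm (xx i) k.
Proof.
move=> hk h2.
have hk2 : 2 <= k <= Tg i by rewrite h2 le_sumn.
have [eq _] := Kdiv hk2.
have gw : Gad i (ww i k) by apply/hasP; exists k => //; rewrite h2 eqxx orbT.
have gv : Gad i (vv i k) by apply/hasP; exists k => //; rewrite h2 eqxx.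
exists (ww i k :: nseq (k - 1) (vv i k)); split; first by rewrite /= size_nseq; lia.
split.
  move=> u; rewrite in_cons => /orP [/eqP -> | ]; first exact: gad_atom gw.
  by rewrite mem_nseq => /andP [_ /eqP ->]; exact: gad_atom gv.
apply: vec2_eq; rewrite vsum_cons vaddE vsum_nseq /xx /ww /vv ?mk0 ?mk1.
  rewrite /Mg; move: hk2; rewrite /Mg; lia.
rewrite mulnA (mulnC (k - 1)) eq /Yg.
lia.
Qed.

Lemma len_bound x k : lengths Hm x k -> k <= x i0.
Proof.
move=> [q [<- [hq <-]]]; apply: vsum_size => u /hq /atom_pos []; done.
Qed.

Lemma len0 x : lengths Hm x 0 <-> x = vzero 2.
Proof.
split; first by move=> [[|? ?] [hs [_ <-]]].
by move=> ->; exists [::].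
Qed.

Lemma len1 x : lengths Hm x 1 <-> is_atom Hm x.
Proof.
split.
  move=> [[|u [|? ?]] [hs [hq <-]]] //; rewrite /vsum /= vadd0; apply: hq; exact: mem_head.
move=> h; exists [:: x]; split => //; split; first by move=> u; rewrite inE => /eqP ->.
by rewrite /vsum /= vadd0.
Qed.

Lemma atom_len x k : is_atom Hm x -> lengths Hm x k -> k = 1.
Proof.
move=> ha hl; have [[|u q] [<- [hq e]]] := hl.
  by have [_ [hn _]] := ha; case: hn; rewrite -e.
have hu := hq u (mem_head _ _).
have hq' : forall w, w \in q -> is_atom Hm w by move=> w hw; apply: hq; exact: memR.
have hs : Hm (vsum q) by apply: Hsum => w /hq' [].
have [_ [_ hsp]] := ha.
case: (hsp u (vsum q) (proj1 hu) hs (esym e)).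
  by move=> e0; have := atom_pos hu; rewrite e0 vzeroE => [[]].
move=> e0; have -> : q = [::] => //.
apply: vsum_nil_eq; first by move=> w /hq' /atom_pos [].
by rewrite e0 vzeroE.
Qed.

Lemma atomic n (x : vec 2) : x i0 <= n -> Hm x -> exists k, lengths Hm x k.
Proof.
elim: n x => [|n IH] x hn hx.
  by exists 0; apply/len0; apply: H_zero => //; lia.
case: (classic (x = vzero 2)) => [->|nz]; first by exists 0; apply/len0.
case: (classic (is_atom Hm x)) => [ha|na]; first by exists 1; apply/len1.
have [a [b [ha [hb [e [na0 nb0]]]]]] :
    exists a b, Hm a /\ Hm b /\ x = vadd a b /\ a <> vzero 2 /\ b <> vzero 2.
  apply: NNPP => hN; apply: na; split => //; split => // a b ha hb e.
  apply: NNPP => hn2; apply: hN; exists a, b; do 3 split => //.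
  by split => h; apply: hn2; [left|right].
have [a0 _] := H_pos ha na0; have [b0 _] := H_pos hb nb0.
have ex : x i0 = a i0 + b i0 by rewrite e vaddE.
have [ka [qa [ea [hqa sa]]]] := IH a ltac:(lia) ha.
have [kb [qb [eb [hqb sb]]]] := IH b ltac:(lia) hb.
exists (ka + kb), (qa ++ qb); split; first by rewrite size_cat ea eb.
split; first by move=> u; rewrite mem_cat => /orP [/hqa|/hqb].
by rewrite vsum_cat sa sb e.
Qed.

Lemma build (P : nat -> Prop) N : exists s : seq nat, forall k, k \in s <-> (k < N /\ P k).
Proof.
elim: N => [|N [s hs]]; first by exists [::] => k; split => // [[]].
case: (classic (P N)) => hP.
  exists (N :: s) => k; rewrite in_cons; split.
    move=> /orP [/eqP -> | /hs [h1 h2]]; split => //; lia.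
  move=> [h1 h2]; case: (ltngtP k N) => hk.
  - by apply/orP; right; apply/hs.
  - lia.
  - done.
exists s => k; split; first by move=> /hs [h1 h2]; split => //; lia.
move=> [h1 h2]; apply/hs; split => //; case: (ltngtP k N) => hk //; [lia | by subst].
Qed.

Lemma Pfin_part x : Hm x -> in_Pfin (lengths Hm x).
Proof.
move=> hx.
case: (classic (x = vzero 2)) => [ex|nz].
  left => k; split; last by move=> ->; apply/len0.
  by move=> /len_bound; rewrite ex vzeroE; lia.
case: (classic (is_atom Hm x)) => [ha|na].
  right; left => k; split; first exact: atom_len.
  by move=> ->; apply/len1.
right; right.
have [s hs] := build (fun k => 2 <= k /\ lengths Hm x k) (x i0).+1.
have key : forall k, lengths Hm x k -> 2 <= k.
  move=> k hk; case: k hk => [/len0 //|[/len1 //|k _]] //.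
exists s; split; last split.
- have [k hk] := atomic (leqnn _) hx.
  have : k \in s by apply/hs; split; [have := len_bound hk; lia | split => //; exact: key].
  by case: s {hs}.
- by apply/allP => k /hs [_ []].
- move=> k; split; last by move=> /hs [_ []].
  move=> hk; apply/hs; split; [have := len_bound hk; lia | split => //; exact: key].
Qed.

Definition one1 := mk 1 1.
Lemma one1_atom : is_atom Hm one1.
Proof.
split; first by apply: Hgen; left; rewrite /Fg /one1 mk0 mk1.
split; first by move=> e; have := mk0 1 1; rewrite -/one1 e vzeroE.
move=> a b ha hb e.
have : a i0 + b i0 = 1 by rewrite -vaddE -e /one1 mk0.
case: (a i0 =P 0) => [/(H_zero ha) -> | h1]; first by left.
move=> h; right; apply: H_zero => //; lia.
Qed.

Lemma realize L : in_Pfin L -> exists x, Hm x /\ (forall k, lengths Hm x k <-> L k).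
Proof.
case=> [hL | [hL | [s [sn [sall hL]]]]].
- exists (vzero 2); split; first exact: H0.
  move=> k; split; last by move=> /hL ->; apply/len0.
  by move=> /len_bound; rewrite vzeroE => h; apply/hL; lia.
- exists one1; split; first by case: one1_atom.
  move=> k; split; first by move=> h; apply/hL; apply: atom_len one1_atom h.
  by move=> /hL ->; apply/len1; exact: one1_atom.
- have eS : Sg (pickle s) = s by rewrite /Sg pickleK.
  have h2 : forall k, k \in s -> 2 <= k by move=> k /(allP sall).
  case E: s sn => [//|a s'] _.
  have ha : a \in Sg (pickle s) by rewrite eS E mem_head.
  exists (xx (pickle s)); split.
    apply: (lengths_H (k := a)); apply: xx_len2; [exact: ha | apply: h2; by rewrite E mem_head].
  move=> k; split.
    by move=> /xx_len1; rewrite eS => /hL.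
  move=> /hL hk; apply: xx_len2; [by rewrite eS | exact: h2].
Qed.

Lemma Hfull : full_system Hm.
Proof. split; [exact: Pfin_part | exact: realize]. Qed.

Lemma Hsub : submonoid Hm.
Proof. split; [exact: H0 | exact: Hadd]. Qed.

Lemma iterE k (s : vec 2) c : iter k (vadd s) (vzero 2) c = k * s c.
Proof. elim: k => [|k IH] /=; first by rewrite vzeroE. by rewrite vaddE IH mulSn. Qed.

Lemma Hprimary : primary Hm.
Proof.
split; first by exists one1; case: one1_atom => h [h' _].
move=> S [hSH [[S0 Sadd] Sdiv]].
case: (classic (exists s, S s /\ s <> vzero 2)) => [[s [Ss ns]] | hno]; last first.
  left => x; split; last by move=> ->.
  by move=> Sx; apply: NNPP => nx; apply: hno; exists x.
right => x; split; first exact: hSH.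
move=> hx.
have [p0 p1] := H_pos (hSH s Ss) ns.
set k := 2 * x i0 + x i1 + s i1 + 2.
have Sk : forall m, S (iter m (vadd s) (vzero 2)).
  by elim=> [|m IH] //=; apply: Sadd.
set z := mk (k * s i0 - x i0) (k * s i1 - x i1).
have k0 : k <= k * s i0 by rewrite leq_pmulr.
have k1 : k <= k * s i1 by rewrite leq_pmulr.
have hz : Hm z.
  apply: Hgen; left; rewrite /Fg /z mk0 mk1.
  set A := x i0 + x i1 + s i1 + 2.
  have hA : A <= k * s i0 - x i0 by rewrite /A /k in k0 *; lia.
  have hAA : A * A <= (k * s i0 - x i0) * (k * s i0 - x i0) by apply: leq_mul.
  have hks : k * s i1 <= A * A.
    have -> : k = A + x i0 by rewrite /k /A; lia.
    have : A * (s i1 + x i0) <= A * A by rewrite leq_mul2l; apply/orP; right; rewrite /A; lia.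
    nia.
  apply/and3P; split; [rewrite /k in k0 *; lia | rewrite /k in k1 *; lia | lia].
apply: (Sdiv (iter k (vadd s) (vzero 2)) x z (Sk k) hx hz).
apply: vec2_eq; rewrite iterE vaddE /z ?mk0 ?mk1; rewrite /k in k0 k1 *; lia.
Qed.

Import GRing.Theory.
Local Open Scope ring_scope.

Lemma i0E : i0 = ord0. Proof. exact: val_inj. Qed.
Lemma i1E : i1 = lift ord0 ord0. Proof. exact: val_inj. Qed.

Lemma dep3 (a b d : 'I_2 -> int) : exists c0 c1 c2 : int,
  (forall j, c0 * a j + c1 * b j + c2 * d j = 0) /\ (c0 <> 0 \/ c1 <> 0 \/ c2 <> 0).
Proof.
set a0 := a i0; set a1 := a i1; set b0 := b i0; set b1 := b i1; set d0 := d i0; set d1 := d i1.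
case: (classic ((b0 * d1 - b1 * d0 <> 0) \/ (a0 * d1 - a1 * d0 <> 0) \/ (a0 * b1 - a1 * b0 <> 0))) => h.
  exists (b0 * d1 - b1 * d0), (- (a0 * d1 - a1 * d0)), (a0 * b1 - a1 * b0); split.
    apply: ord2_cases; rewrite -/a0 -/a1 -/b0 -/b1 -/d0 -/d1; lia.
  move: h; lia.
have [h1 [h2 h3]] : [/\ b0 * d1 - b1 * d0 = 0, a0 * d1 - a1 * d0 = 0 & a0 * b1 - a1 * b0 = 0].
  by split; apply: NNPP => hn; apply: h; tauto.
case: (a0 =P 0) => [ha0 | ha0].
  case: (a1 =P 0) => [ha1 | ha1].
    exists 1, 0, 0; split; last by left.
    apply: ord2_cases; rewrite -/a0 -/a1 -/b0 -/b1 -/d0 -/d1; lia.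
  exists b1, (- a1), 0; split; last by right; left; lia.
  apply: ord2_cases; rewrite -/a0 -/a1 -/b0 -/b1 -/d0 -/d1; lia.
exists b0, (- a0), 0; split; last by right; left; lia.
apply: ord2_cases; rewrite -/a0 -/a1 -/b0 -/b1 -/d0 -/d1; lia.
Qed.

Lemma Hrank : has_rank Hm 2.
Proof.
split.
  exists (fun (i j : 'I_2) => if val i == 0%N then 1%:Z else (if val j == 0%N then 2%:Z else 1%:Z)).
  split.
    apply: ord2_cases.
      exists (mk 1 1), (vzero 2); split; first by apply: Hgen; left; rewrite /Fg mk0 mk1.
      split; first exact: H0.
      by apply: ord2_cases; rewrite /= ?mk0 ?mk1 vzeroE.
    exists (mk 2 1), (vzero 2); split; first by apply: Hgen; left; rewrite /Fg mk0 mk1.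
    split; first exact: H0.
    by apply: ord2_cases; rewrite /= ?mk0 ?mk1 vzeroE.
  move=> c hc.
  have h0 := hc i0; have h1 := hc i1.
  rewrite !big_ord_recl big_ord0 /= in h0; rewrite !big_ord_recl big_ord0 /= in h1.
  apply: ord2_cases; rewrite ?i0E ?i1E; lia.
move=> [v [_ hind]].
have [c0 [c1 [c2 [hs hn]]]] := dep3 (v ord0) (v (lift ord0 ord0)) (v (lift ord0 (lift ord0 ord0))).
pose c := fun i : 'I_3 => if val i == 0%N then c0 else if val i == 1%N then c1 else c2.
have hz := hind c.
have : forall j, \sum_(i < 3) c i * v i j = 0.
  by move=> j; rewrite !big_ord_recl big_ord0 /= addr0 addrA; exact: hs.
move=> /hz hc.
have e0 := hc ord0; have e1 := hc (lift ord0 ord0); have e2 := hc (lift ord0 (lift ord0 ord0)).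
rewrite /c /= in e0 e1 e2.
case: hn => [|[]]; tauto.
Qed.

Theorem theorem4p6 :
  exists (n : nat) (H : vec n -> Prop),
    submonoid H /\ has_rank H 2 /\ primary H /\ full_system H.
Proof.
exists 2%N, Hm; split; [exact: Hsub | split; [exact: Hrank | split; [exact: Hprimary | exact: Hfull]]].
Qed.
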